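(* Let $p(x,y)$ be a real polynomial with $p(0,0)=0$, $\nabla p(0,0)=(0,0)$, $\dim\operatorname{Co}N_p=2$, such that for every $A\in\mathbb{N}^2$ the main $A$-quasi-homogeneous form of $p$ is nonnegative on $\mathbb{R}^2$. Let $A=(A_1,A_2)\in\mathcal{A}_p$. Write $\varphi_1^A=\sum_{i=1}^s a_ix^{\alpha_i}y^{\beta_i}$ with $a_i\neq0$, $\alpha_1>\dots>\alpha_s\ge0$, and $\varphi_2^A=\sum_{i=1}^v b_ix^{\chi_i}y^{\eta_i}$ with $b_i\neq0$, $\chi_1>\dots>\chi_v\ge0$. Then condition $(C1)_A$ holds (there is $(x_0,y_0)$ with $\varphi_1^A(x_0,y_0)=0$ and $\varphi_2^A(x_0,y_0)<0$) if and only if at least one of the following holds: (a) $\alpha_s>0$, $\chi_v=0$, and ($b_v<0$ or $\eta_v$ is not a positive even integer); (b) $\beta_1>0$, $\eta_1=0$, and ($b_1<0$ or $\chi_1$ is not a positive even integer); (c) there exists $u_0\in U_p(A)$ such that the system $x\neq0$, $y\neq0$, $x^{-A_2}y^{A_1}=u_0$, $x^{\chi_1}y^{\eta_1}g_2^A(u_0)<0$ has a real solution $(x,y)$.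
   Context: $\mathbb{N}=\{1,2,\dots\}$; $\mathbb{N}_0^2$ is the set of $(A_1,A_2)\in\mathbb{N}^2$ with $\gcd(A_1,A_2)=1$. $N_p$ is the support of $p$ (exponent vectors of terms with nonzero coefficients) and $\operatorname{Co}N_p$ its convex hull. For $A\in\mathbb{N}^2$ the main $A$-quasi-homogeneous form of $p$ is the sum of the terms of $p$ whose exponent vectors $k$ minimize $\langle A,k\rangle$ over $N_p$. For $A\in\mathbb{N}_0^2$, with $B_1^A<B_2^A<\dots$ the distinct values of $\langle A,k\rangle$, $k\in N_p$, $\varphi_i^A$ is the sum of the terms of $p$ with $\langle A,k\rangle=B_i^A$ (so $\varphi_1^A$ is the main form, and $\varphi_2^A\not\equiv0$ here). The characteristic polynomial of a form $\sum_i c_ix^{\gamma_i}y^{\delta_i}$ ($c_i\neq0$, $\gamma_1>\gamma_2>\dots$) from this decomposition is $\sum_i c_iu^{(\gamma_1-\gamma_i)/A_2}$; $g_1^A,g_2^A$ are those of $\varphi_1^A,\varphi_2^A$. $\mathcal{A}_p$ is the set of $A\in\mathbb{N}_0^2$ such that $\varphi_1^A$ has at least three terms, $g_1^A\ge0$ on $\mathbb{R}$, and $g_1^A$ has a real root; $U_p(A)$ is the set of real roots of $g_1^A$. *)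

(* Defs.v *)
From HB Require Import structures.
From mathcomp Require Import all_boot all_order all_algebra.
From mathcomp Require Import reals.
Set Implicit Arguments. Unset Strict Implicit. Unset Printing Implicit Defensive.
Import Order.TTheory GRing.Theory Num.Theory.
Local Open Scope ring_scope.

Section Defs.
Variable R : realType.

(* A bivariate polynomial p(x,y) is an element of {poly {poly R}}:
   the coefficient of x^i y^j is p`_i`_j. *)
Definition coef2 (p : {poly {poly R}}) (k : nat * nat) : R := p`_k.1`_k.2.

Definition supp (p : {poly {poly R}}) : seq (nat * nat) :=
  [seq k <- [seq (i, j) | i <- iota 0 (size p), j <- iota 0 (size p`_i)]
     | coef2 p k != 0].

Definition eval2 (p : {poly {poly R}}) (x y : R) : R :=
  \sum_(k <- supp p) coef2 p k * x ^+ k.1 * y ^+ k.2.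

(* dim Co N_p = 2 : N_p contains three affinely independent points. *)
Definition full_dim (p : {poly {poly R}}) : Prop :=
  exists k1 k2 k3, [/\ k1 \in supp p, k2 \in supp p & k3 \in supp p] /\
    ((k2.1%:Z - k1.1%:Z) * (k3.2%:Z - k1.2%:Z)
      != (k3.1%:Z - k1.1%:Z) * (k2.2%:Z - k1.2%:Z))%R.

Definition wt (A : nat * nat) (k : nat * nat) : nat := (A.1 * k.1 + A.2 * k.2)%N.

(* B_1^A < B_2^A < ... : the distinct values of <A,k>, k in N_p
   (0-indexed: Bval p A 0 = B_1^A, Bval p A 1 = B_2^A). *)
Definition Bvals (p : {poly {poly R}}) (A : nat * nat) : seq nat :=
  sort leq (undup (map (wt A) (supp p))).
Definition Bval (p : {poly {poly R}}) (A : nat * nat) (n : nat) : nat :=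
  nth 0%N (Bvals p A) n.

(* the exponent vectors of the terms of phi_{n+1}^A, sorted by strictly
   decreasing x-exponent: [(alpha_1,beta_1); ...; (alpha_s,beta_s)] *)
Definition terms (p : {poly {poly R}}) (A : nat * nat) (n : nat)
  : seq (nat * nat) :=
  sort (fun k l : nat * nat => (l.1 <= k.1)%N)
    [seq k <- supp p | wt A k == Bval p A n].

(* phi_{n+1}^A (x,y); for n = 0 this is the main A-quasi-homogeneous form *)
Definition phi (p : {poly {poly R}}) (A : nat * nat) (n : nat) (x y : R) : R :=
  \sum_(k <- terms p A n) coef2 p k * x ^+ k.1 * y ^+ k.2.

Definition first_exp p A n : nat * nat := head (0%N, 0%N) (terms p A n).
Definition last_exp p A n : nat * nat := last (0%N, 0%N) (terms p A n).

Definition charpoly (p : {poly {poly R}}) (A : nat * nat) (n : nat) : {poly R} :=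
  \sum_(k <- terms p A n)
     (coef2 p k)%:P * 'X^(((first_exp p A n).1 - k.1) %/ A.2)%N.

Definition in_N0 (A : nat * nat) : Prop :=
  [/\ (0 < A.1)%N, (0 < A.2)%N & coprime A.1 A.2].

Definition in_Ap (p : {poly {poly R}}) (A : nat * nat) : Prop :=
  [/\ in_N0 A, (3 <= size (terms p A 0))%N,
      (forall u : R, 0 <= (charpoly p A 0).[u])
    & exists u : R, root (charpoly p A 0) u].

Definition C1 (p : {poly {poly R}}) (A : nat * nat) : Prop :=
  exists x0 y0 : R, phi p A 0 x0 y0 = 0 /\ phi p A 1 x0 y0 < 0.

End Defs.

(* Main.v *)
Require Import Defs.
From HB Require Import structures.
From mathcomp Require Import all_boot all_order all_algebra.
From mathcomp Require Import reals.
From mathcomp Require Import zify ring lra.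
Set Implicit Arguments. Unset Strict Implicit. Unset Printing Implicit Defensive.
Import Order.TTheory GRing.Theory Num.Theory.
Local Open Scope ring_scope.

Definition lex1 (k l : nat * nat) : bool := (l.1 <= k.1)%N.

Lemma lex1_total : total lex1.
Proof. by move=> k l; rewrite /lex1 leq_total. Qed.
Lemma lex1_trans : transitive lex1.
Proof. by move=> a b c; rewrite /lex1 => h1 h2; apply: leq_trans h2 h1. Qed.

Lemma terms_uniq (R : realType) (p : {poly {poly R}}) A n : uniq (terms p A n).
Proof.
rewrite /terms sort_uniq; apply: filter_uniq; rewrite /supp; apply: filter_uniq.
apply: allpairs_uniq_dep => //; first exact: iota_uniq.
  by move=> i _; exact: iota_uniq.
by move=> [a b] [c d] _ _ /= [-> ->].
Qed.

Lemma mem_terms (R : realType) (p : {poly {poly R}}) A n k :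
  k \in terms p A n -> coef2 p k != 0 /\ wt A k = Bval p A n.
Proof.
rewrite /terms mem_sort mem_filter => /andP[/eqP -> ].
by rewrite /supp mem_filter => /andP[-> _].
Qed.

Lemma terms_sorted (R : realType) (p : {poly {poly R}}) A n : sorted lex1 (terms p A n).
Proof. rewrite /terms; exact: (sort_sorted lex1_total). Qed.

Lemma same_wt A k l : (0 < A.1)%N -> (0 < A.2)%N -> wt A k = wt A l ->
  (k.1 = l.1 \/ k.2 = l.2) -> k = l.
Proof.
case: k l => [a b] [c d] /=; rewrite /wt /= => h1 h2 hw [e|e].
  subst c; have : (A.2 * b = A.2 * d)%N by lia.
  by move/eqP; rewrite eqn_pmul2l // => /eqP ->.
subst d; have : (A.1 * a = A.1 * c)%N by lia.
by move/eqP; rewrite eqn_pmul2l // => /eqP ->.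
Qed.

Lemma first_max (R : realType) (p : {poly {poly R}}) A n k :
  k \in terms p A n -> (k.1 <= (first_exp p A n).1)%N.
Proof.
rewrite /first_exp; have := terms_sorted p A n.
case: (terms p A n) => [|f s] //= hs; rewrite inE => /orP[/eqP -> //|ks].
by have /allP/(_ k ks) := order_path_min lex1_trans hs.
Qed.

Lemma last_min (R : realType) (p : {poly {poly R}}) A n k :
  k \in terms p A n -> ((last_exp p A n).1 <= k.1)%N.
Proof.
rewrite /last_exp; have := terms_sorted p A n.
case/lastP: (terms p A n) => [|s l] //= hs; rewrite last_rcons mem_rcons inE.
case/orP=> [/eqP -> //|ks].
have hs' : sorted (fun a b => lex1 b a) (l :: rev s).
  by rewrite -rev_rcons rev_sorted.
by have /allP/(_ k) := order_path_min (fun a b c h1 h2 => lex1_trans h2 h1) hs'; apply; rewrite mem_rev.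
Qed.

Lemma phi_x0 (R : realType) (p : {poly {poly R}}) A n y :
  in_N0 A -> coef2 p (0, 0)%N = 0 ->
  phi p A n 0 y = if ((last_exp p A n).1 == 0)%N then
     coef2 p (last_exp p A n) * y ^+ (last_exp p A n).2 else 0.
Proof.
move=> [A1 A2 _] c00; rewrite /phi /last_exp.
have hu := terms_uniq p A n.
have hm := @mem_terms R p A n.
have hmin := @last_min R p A n; rewrite /last_exp in hmin.
case/lastP E: (terms p A n) hu hm hmin => [|s l] hu hm hmin.
  by rewrite big_nil /= c00 mul0r.
rewrite last_rcons in hmin *; rewrite big_rcons /= big_seq big1 ?add0r; last first.
  move=> k ks; have kT : k \in rcons s l by rewrite mem_rcons inE ks orbT.
  have lT : l \in rcons s l by rewrite mem_rcons inE eqxx.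
  have kl : k != l.
    by apply: contraTneq ks => ->; move: hu; rewrite rcons_uniq => /andP[].
  have h1 := hmin k kT.
  have : k.1 != l.1.
    apply: contra kl => /eqP e; apply/eqP; apply: same_wt A1 A2 _ (or_introl e).
    by rewrite (hm k kT).2 (hm l lT).2.
  move=> ne; rewrite expr0n; have -> : (k.1 == 0)%N = false by lia.
  by rewrite mulr0 mul0r.
rewrite expr0n; case: (l.1 == 0)%N; first by rewrite mulr1.
by rewrite mulr0 mul0r.
Qed.

Lemma phi_y0 (R : realType) (p : {poly {poly R}}) A n x :
  in_N0 A -> coef2 p (0, 0)%N = 0 ->
  phi p A n x 0 = if ((first_exp p A n).2 == 0)%N then
     coef2 p (first_exp p A n) * x ^+ (first_exp p A n).1 else 0.
Proof.
move=> [A1 A2 _] c00; rewrite /phi /first_exp.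
have hu := terms_uniq p A n.
have hm := @mem_terms R p A n.
have hmax := @first_max R p A n; rewrite /first_exp in hmax.
case E: (terms p A n) hu hm hmax => [|f s] hu hm hmax.
  by rewrite big_nil /= c00 mul0r.
rewrite big_cons /= big_seq big1 ?addr0; last first.
  move=> k ks; have kT : k \in f :: s by rewrite inE ks orbT.
  have fT : f \in f :: s by rewrite inE eqxx.
  have kl : k != f.
    by apply: contraTneq ks => ->; move: hu => /= /andP[].
  have h1 := hmax k kT.
  have hw : wt A k = wt A f by rewrite (hm k kT).2 (hm f fT).2.
  have : k.2 != f.2.
    apply: contra kl => /eqP e; apply/eqP; exact: same_wt A1 A2 hw (or_intror e).
  move=> ne; rewrite expr0n; have -> : (k.2 == 0)%N = false.
    have h3 : (A.1 * k.1 <= A.1 * f.1)%N by rewrite leq_mul2l h1 orbT.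
    have h4 : (A.2 * f.2 <= A.2 * k.2)%N.
      by move: hw; rewrite /wt => hw; rewrite -(leq_add2l (A.1 * k.1)) hw leq_add2r.
    rewrite leq_pmul2l // in h4; lia.
  by rewrite mulr0.
rewrite expr0n; case: (f.2 == 0)%N; first by rewrite mulr1.
by rewrite mulr0.
Qed.

Lemma first_mem (R : realType) (p : {poly {poly R}}) A n k :
  k \in terms p A n -> first_exp p A n \in terms p A n.
Proof. by rewrite /first_exp; case: (terms p A n) => //= f s _; rewrite mem_head. Qed.

Lemma last_mem (R : realType) (p : {poly {poly R}}) A n k :
  k \in terms p A n -> last_exp p A n \in terms p A n.
Proof.
rewrite /last_exp; case/lastP: (terms p A n) => //= s l _.
by rewrite last_rcons mem_rcons mem_head.
Qed.

Lemma exps_rel A k f : in_N0 A -> wt A k = wt A f -> (k.1 <= f.1)%N ->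
  let m := ((f.1 - k.1) %/ A.2)%N in
  f.1 = (k.1 + m * A.2)%N /\ k.2 = (f.2 + m * A.1)%N.
Proof.
move=> [A1 A2 cop] hw kf m.
have h3 : (A.1 * k.1 <= A.1 * f.1)%N by rewrite leq_mul2l kf orbT.
have h4 : (A.2 * f.2 <= A.2 * k.2)%N.
  by move: hw; rewrite /wt => hw; rewrite -(leq_add2l (A.1 * k.1)) hw leq_add2r.
have h5 : (f.2 <= k.2)%N by rewrite -(leq_pmul2l A2).
have e : (A.1 * (f.1 - k.1) = A.2 * (k.2 - f.2))%N.
  rewrite !mulnBr; move: hw h3 h4; rewrite /wt.
  move: (A.1 * k.1)%N (A.1 * f.1)%N (A.2 * k.2)%N (A.2 * f.2)%N => a b c d; lia.
have dv : (A.2 %| f.1 - k.1)%N.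
  by rewrite -(@Gauss_dvdr A.2 A.1 (f.1 - k.1) (etrans (coprime_sym _ _) cop)) e dvdn_mulr.
have em : (f.1 - k.1 = m * A.2)%N by rewrite /m divnK.
split; first by rewrite -em subnKC.
rewrite em in e.
have : (k.2 - f.2 = A.1 * m)%N.
  by apply/eqP; rewrite -(eqn_pmul2l A2) -e [X in _ == X]mulnC -mulnA.
move=> e2; rewrite mulnC -e2 subnKC //.
Qed.

Lemma phi_factor (R : realType) (p : {poly {poly R}}) A n (x y : R) :
  in_N0 A -> x != 0 -> y != 0 ->
  phi p A n x y = x ^+ (first_exp p A n).1 * y ^+ (first_exp p A n).2 *
     (charpoly p A n).[x ^- A.2 * y ^+ A.1].
Proof.
move=> hA x0 y0; rewrite /phi /charpoly horner_sum mulr_sumr.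
apply: eq_big_seq => k kT.
have fT := first_mem kT.
have hw : wt A k = wt A (first_exp p A n) by rewrite (mem_terms kT).2 (mem_terms fT).2.
have [e1 e2] := exps_rel hA hw (first_max kT).
move: e1 e2; set f := first_exp p A n; set m := ((f.1 - k.1) %/ A.2)%N => e1 e2.
rewrite hornerCM hornerXn e2 e1 !exprD exprMn exprVn -!exprM.
have xm : x ^+ (A.2 * m) != 0 by rewrite expf_neq0.
rewrite [(m * A.2)%N]mulnC [(m * A.1)%N]mulnC.
field.
by [].
Qed.

Lemma terms1_ne (R : realType) (p : {poly {poly R}}) A : in_N0 A -> full_dim p ->
  exists k, k \in terms p A 1.
Proof.
move=> [A1 A2 _] [k1 [k2 [k3 [[h1 h2 h3] hd]]]].
have inB k : k \in supp p -> wt A k \in Bvals p A.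
  by move=> ks; rewrite /Bvals mem_sort mem_undup map_f.
case: (ltnP 1 (size (Bvals p A))) => hs.
  have : Bval p A 1 \in Bvals p A by rewrite /Bval mem_nth.
  rewrite {1}/Bvals mem_sort mem_undup => /mapP[k ks ek]; exists k.
  by rewrite /terms mem_sort mem_filter ks -ek eqxx.
have eq1 : forall k l, k \in supp p -> l \in supp p -> wt A k = wt A l.
  move=> k l /inB kB /inB lB; move: hs kB lB.
  by case: (Bvals p A) => [|a [|b s]] //= _; rewrite !inE => /eqP-> /eqP->.
exfalso; move: hd; have := eq1 _ _ h1 h2; have := eq1 _ _ h1 h3; rewrite /wt => e3 e2.
move/negP; apply; apply/eqP.
move: e2 e3 A1 A2; clear h1 h2 h3 inB eq1 hs.
case: k1 k2 k3 => [a1 b1] [a2 b2] [a3 b3] /=; case: A => [c d] /= e2 e3 hc hd.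
have E2 : (c%:Z * a2%:Z + d%:Z * b2%:Z - (c%:Z * a1%:Z + d%:Z * b1%:Z) = 0)%R.
  by apply/eqP; rewrite subr_eq0 -!PoszM -!PoszD e2.
have E3 : (c%:Z * a3%:Z + d%:Z * b3%:Z - (c%:Z * a1%:Z + d%:Z * b1%:Z) = 0)%R.
  by apply/eqP; rewrite subr_eq0 -!PoszM -!PoszD e3.
set L := ((a2%:Z - a1%:Z) * (b3%:Z - b1%:Z))%R.
set M := ((a3%:Z - a1%:Z) * (b2%:Z - b1%:Z))%R.
have Z : (d%:Z * (L - M) = (a2%:Z - a1%:Z) * (c%:Z * a3%:Z + d%:Z * b3%:Z - (c%:Z * a1%:Z + d%:Z * b1%:Z))
   - (a3%:Z - a1%:Z) * (c%:Z * a2%:Z + d%:Z * b2%:Z - (c%:Z * a1%:Z + d%:Z * b1%:Z)))%R.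
  by rewrite /L /M; ring.
rewrite E2 E3 !mulr0 subr0 in Z.
apply/eqP; rewrite -subr_eq0; move/eqP: Z; rewrite mulf_eq0 => /orP[|//].
by rewrite eqz_nat; move/eqP=> d0; move: hd; rewrite d0.
Qed.

Lemma notzero (R : realType) (p : {poly {poly R}}) A n k :
  coef2 p (0, 0)%N = 0 -> k \in terms p A n ->
  ((k.1 = 0 -> 0 < k.2) /\ (k.2 = 0 -> 0 < k.1))%N.
Proof.
move=> c00 /mem_terms [cn _]; case: k cn => [a b] /= cn.
split=> e; subst; rewrite lt0n; apply/negP => /eqP e; subst;
  by rewrite c00 eqxx in cn.
Qed.

Theorem mainTheorem6 (R : realType) (p : {poly {poly R}}) (A : nat * nat) :
  coef2 p (0, 0)%N = 0 ->
  coef2 p (1, 0)%N = 0 -> coef2 p (0, 1)%N = 0 ->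
  full_dim p ->
  (forall A' : nat * nat, (0 < A'.1)%N -> (0 < A'.2)%N ->
     forall x y : R, 0 <= phi p A' 0 x y) ->
  in_Ap p A ->
  C1 p A <->
  [\/ [/\ (0 < (last_exp p A 0).1)%N, (last_exp p A 1).1 = 0%N &
          (coef2 p (last_exp p A 1) < 0 \/
           ~ ((0 < (last_exp p A 1).2)%N /\ ~~ odd (last_exp p A 1).2))],
      [/\ (0 < (first_exp p A 0).2)%N, (first_exp p A 1).2 = 0%N &
          (coef2 p (first_exp p A 1) < 0 \/
           ~ ((0 < (first_exp p A 1).1)%N /\ ~~ odd (first_exp p A 1).1))]
    | exists u0 : R, root (charpoly p A 0) u0 /\
        exists x y : R, [/\ x != 0, y != 0, x ^- A.2 * y ^+ A.1 = u0 &
          x ^+ (first_exp p A 1).1 * y ^+ (first_exp p A 1).2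
            * (charpoly p A 1).[u0] < 0]].
Proof.
move=> c00 _ _ fd _ [hA hs _ _].
have [k0 k0T] : exists k, k \in terms p A 0.
  by case: (terms p A 0) hs => // k s _; exists k; rewrite mem_head.
have [k1 k1T] := terms1_ne hA fd.
have l0T := last_mem k0T; have l1T := last_mem k1T.
have f0T := first_mem k0T; have f1T := first_mem k1T.
split.
- case=> x0 [y0 [h0 h1]].
  case: (eqVneq x0 0) => [ex|x0n].
    rewrite ex phi_x0 // in h0; rewrite ex phi_x0 // in h1.
    move: h1; case: ifP => [/eqP L1|_]; last by rewrite ltxx.
    move=> h1; apply: Or31; split => //.
      rewrite lt0n; apply/negP => /eqP L0; move: h0; rewrite L0 eqxx.
      move/eqP; rewrite mulf_eq0 (negbTE (mem_terms l0T).1) /= expf_eq0.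
      case/andP=> _ /eqP y00; move: h1; rewrite y00 expr0n.
      have pos := (notzero c00 l1T).1 L1.
      by rewrite (negbTE (lt0n_neq0 pos)) mulr0 ltxx.
    case: (ltrP (coef2 p (last_exp p A 1)) 0) => hc; [by left|right].
    case=> _ ev; have := exprn_even_ge0 y0 ev => hy.
    by move: h1; rewrite ltNge mulr_ge0.
  case: (eqVneq y0 0) => [ey|y0n].
    rewrite ey phi_y0 // in h0; rewrite ey phi_y0 // in h1.
    move: h1; case: ifP => [/eqP F1|_]; last by rewrite ltxx.
    move=> h1; apply: Or32; split => //.
      rewrite lt0n; apply/negP => /eqP F0; move: h0; rewrite F0 eqxx.
      move/eqP; rewrite mulf_eq0 (negbTE (mem_terms f0T).1) /= expf_eq0.
      by rewrite (negbTE x0n) andbF.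
    case: (ltrP (coef2 p (first_exp p A 1)) 0) => hc; [by left|right].
    case=> _ ev; have := exprn_even_ge0 x0 ev => hy.
    by move: h1; rewrite ltNge mulr_ge0.
  rewrite !phi_factor // in h0 h1.
  apply: Or33; exists (x0 ^- A.2 * y0 ^+ A.1); split.
    move/eqP: h0; rewrite !mulf_eq0 !expf_eq0 (negbTE x0n) (negbTE y0n) !andbF /=.
    by move=> h; apply/rootP/eqP.
  by exists x0, y0; split.
- case=> [[L0 L1 hc]|[F0 F1 hc]|[u0 [ru [x [y [xn yn hu hneg]]]]]].
  + have c1n := (mem_terms l1T).1; have eta := (notzero c00 l1T).1 L1.
    exists 0, (if coef2 p (last_exp p A 1) < 0 then 1 else -1).
    rewrite !phi_x0 // L1 eqxx; have -> : ((last_exp p A 0).1 == 0)%N = false.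
      by apply: negbTE; rewrite -lt0n.
    split=> //.
    case: ifP => hneg; first by rewrite expr1n mulr1.
    case: hc => [hc|hc]; first by rewrite hc in hneg.
    have od : odd (last_exp p A 1).2.
      by case: (boolP (odd _)) => // ev; exfalso; apply: hc.
    rewrite -signr_odd od expr1 mulrN1 oppr_lt0 lt_neqAle eq_sym c1n /=.
    by rewrite leNgt hneg.
  + have c1n := (mem_terms f1T).1; have eta := (notzero c00 f1T).2 F1.
    exists (if coef2 p (first_exp p A 1) < 0 then 1 else -1), 0.
    rewrite !phi_y0 // F1 eqxx; have -> : ((first_exp p A 0).2 == 0)%N = false.
      by apply: negbTE; rewrite -lt0n.
    split=> //.
    case: ifP => hneg; first by rewrite expr1n mulr1.
    case: hc => [hc|hc]; first by rewrite hc in hneg.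
    have od : odd (first_exp p A 1).1.
      by case: (boolP (odd _)) => // ev; exfalso; apply: hc.
    rewrite -signr_odd od expr1 mulrN1 oppr_lt0 lt_neqAle eq_sym c1n /=.
    by rewrite leNgt hneg.
  + exists x, y; rewrite !phi_factor // hu; split => //.
    by move/rootP: ru => ->; rewrite mulr0.
Qed.
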